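(* (Perfect completeness of the Five Cells protocol.) Let a Five Cells puzzle on an $m\times n$ grid be given. If the prover $P$ knows a solution of the puzzle and follows the Five Cells zero-knowledge protocol described in the context, then the verifier $V$ always accepts.
   Context: Five Cells puzzle: an $m\times n$ rectangular grid in which some cells contain a number. A solution is a partition of the grid into pentominoes (connected sets of 5 cells; a pentomino obtained from another by rotation or reflection counts as a different type, giving 63 types) such that for every numbered cell, the number equals the number of that cell's four edges which are borders of pentominoes (edges on the outer boundary of the grid count as borders). Labelling every cell with this count gives the ''extended solution''. Cards: each card has either an integer or nothing (a blank card) on its front; all backs are indistinguishable. A pile-shifting shuffle applied to a matrix of face-down cards (each entry may be a stack, all stacks in a row of equal size) cyclically shifts its columns by a uniformly random amount unknown to everyone. Chosen cut protocol: given face-down cards (or equal-size stacks) $c_1,\dots,c_q$ and a secret index $i$ chosen by $P$, $P$ forms a $3\times q$ matrix with row 1 equal to $c_1,\dots,c_q$, row 2 a face-down card $1$ in column $i$ and $0$ elsewhere, row 3 a card $1$ in column 1 and $0$ elsewhere (turned face-down); a pile-shifting shuffle is applied; row 2 is revealed and the card of row 1 above the $1$ is $c_i$; after $c_i$ has been used it is put back in place, all face-up cards are turned face-down, another pile-shifting shuffle is applied, row 3 is revealed and the columns are cyclically shifted so that its $1$ returns to column 1, restoring the original order. Printing protocol: given a face-down $p\times q$ template and a face-down $p\times q$ area of cards, each template card is placed on the corresponding area card, forming $pq$ stacks of two; for each stack, $P$ uses the chosen cut protocol to select one of its two cards, the selected card is revealed, $V$ rejects unless it is blank, and it is removed. Five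 Cells protocol: $P$ publicly puts a blank card on every cell, appends 4 rows and 4 columns of blank ''dummy'' cards below and to the right, and turns all cards face-down, giving an $(m+4)\times(n+4)$ matrix, read row by row as a sequence $a_1,a_2,\dots$ (so the card below $a_j$ is $a_{j+n+4}$). $P$ builds 63 templates, one per pentomino type: a $5\times5$ matrix with the pentomino at the top-left, each of its cells a card with the number of that cell's edges which are borders of the pentomino, all other cards blank; $V$ checks all templates. Let $B_1,\dots,B_k$ ($k=mn/5$) be the pentominoes of $P$'s solution. For $i=1,\dots,k$: (1) using the chosen cut protocol on the sequence, $P$ selects the top-left card of a $5\times5$ area (cards at positions $j+r(n+4)+c$, $0\le r,c\le 4$) containing $B_i$ in the same position as in its template; (2) using the chosen cut protocol, $P$ selects the template of $B_i$'s type; (3) the printing protocol is applied to this template and area; (4) $P$ reconstructs the used template and returns it to the pile, and $V$ checks again that all 63 templates are correct (rejecting otherwise). Finally $P$ reveals the cards on the originally numbered cells and $V$ rejects unless they match the given numbers; $P$ reveals all dummy cards and $V$ rejects unless they are blank. Otherwise $V$ accepts. *)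

(* Defs.v *)
From mathcomp Require Import all_boot.

Set Implicit Arguments.
Unset Strict Implicit.
Unset Printing Implicit Defensive.

(* A card: an integer (here a natural number; all numbers used are in 0..4,
   marker cards are 0 and 1) or blank (None).  A pile (stack) is a seq of cards. *)
Definition Card := option nat.
Definition Pile := seq Card.

Definition cell (m n : nat) := ('I_m * 'I_n)%type.

Definition adj (m n : nat) (x y : cell m n) : bool :=
  ((nat_of_ord x.1 == nat_of_ord y.1) &&
     (((nat_of_ord x.2).+1 == nat_of_ord y.2) || ((nat_of_ord y.2).+1 == nat_of_ord x.2)))
  || ((nat_of_ord x.2 == nat_of_ord y.2) &&
     (((nat_of_ord x.1).+1 == nat_of_ord y.1) || ((nat_of_ord y.1).+1 == nat_of_ord x.1))).

Definition connected_set (m n : nat) (S : {set cell m n}) : bool :=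
  [forall x in S, forall y in S,
     connect [rel u v | [&& u \in S, v \in S & adj u v]] x y].

Definition pentomino (m n : nat) (S : {set cell m n}) : bool :=
  (#|S| == 5) && connected_set S.

Definition natS (m n : nat) (S : {set cell m n}) : pred (nat * nat) :=
  fun rc => [exists x in S, (nat_of_ord x.1, nat_of_ord x.2) == rc].

(* number of the four edges of cell (a,b) that are borders of the region S
   (i.e. the neighbour across the edge is not in S; an edge with no neighbour
   at all, e.g. on the outer boundary, is a border) *)
Definition nbr_count (S : pred (nat * nat)) (a b : nat) : nat :=
  ((a == 0) || ~~ S (a.-1, b)) + ~~ S (a.+1, b)
  + ((b == 0) || ~~ S (a, b.-1)) + ~~ S (a, b.+1).

Definition is_solution (m n : nat) (clue : cell m n -> option nat)
    (P : {set {set cell m n}}) : Prop :=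
  [/\ partition P [set: cell m n],
      (forall B, B \in P -> pentomino B) &
      (forall x v, clue x = Some v ->
          nbr_count (natS (pblock P x)) (nat_of_ord x.1) (nat_of_ord x.2) = v)].

(* pentomino types (rotations/reflections distinct) = pentominoes inside a
   5x5 square touching its top row and its left column ("top-left") *)
Definition pent_types : seq {set cell 5 5} :=
  enum [set S : {set cell 5 5} | [&& pentomino S,
          [exists x in S, nat_of_ord x.1 == 0] &
          [exists x in S, nat_of_ord x.2 == 0]]].

Definition tmpl_cards (S : {set cell 5 5}) : Pile :=
  [seq (if natS S (r, c) then Some (nbr_count (natS S) r c) else None)
     | r <- iota 0 5, c <- iota 0 5].

Definition correct_templates : seq Pile := map tmpl_cards pent_types.

(* [sh] gives the (arbitrary, unknown) shift amount of every pile-shifting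
   shuffle, indexed by a label identifying the shuffle occurrence.
   The continuation [k] receives the shuffled row 1 and the (public) column
   [p] where the revealed row 2 has its 1; the selected pile is the one in
   column p.  It returns the modified row 1 (or None = V rejects) and extra
   data.  Then the order is restored with the second shuffle and row 3. *)
Definition chosen_cut {A : Type} (sh : seq nat -> nat) (l : seq nat)
    (c : seq Pile) (i : nat) (k : seq Pile -> nat -> option (seq Pile * A))
    : option (seq Pile * A) :=
  let q := size c in
  let row2 : seq Card := [seq (if k0 == i then Some 1 else Some 0) | k0 <- iota 0 q] in
  let row3 : seq Card := [seq (if k0 == 0 then Some 1 else Some 0) | k0 <- iota 0 q] in
  let cols1 := rotr (sh (rcons l 0) %% q) (zip c (zip row2 row3)) in
  let p := index (Some 1) (unzip1 (unzip2 cols1)) in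
  match k (unzip1 cols1) p with
  | None => None
  | Some (c', a) =>
      let cols3 := rotr (sh (rcons l 1) %% q) (zip c' (unzip2 cols1)) in
      let p3 := index (Some 1) (unzip2 (unzip2 cols3)) in
      Some (unzip1 (rot p3 cols3), a)
  end.

(* one stack (template card on area card at position pos): P selects a blank
   card (the template card if it is blank, else the area card); it is revealed,
   V rejects unless blank, it is removed; the remaining card stays in place. *)
Definition print_stack (sh : seq nat -> nat) (l : seq nat) (tcard : Card)
    (S : seq Pile) (pos : nat) : option (seq Pile) :=
  let b := if tcard == None then 0 else 1 in
  match chosen_cut (A := unit) sh l [:: [:: tcard]; nth [::] S pos] b
          (fun cs p => if nth [::] cs p == [:: None]
                       then Some (set_nth [::] cs p [::], tt) else None) with
  | None => None
  | Some (res, _) => Some (set_nth [::] S pos (flatten res))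
  end.

(* (template index r, area position) pairs of the 5x5 area whose top-left card
   is at position p of a row-major sequence of length q with N columns *)
Definition area_positions (N p q : nat) : seq (nat * nat) :=
  [seq (r, (p + (r %/ 5) * N + r %% 5) %% q) | r <- iota 0 25].

Fixpoint printing (sh : seq nat -> nat) (l : seq nat) (T : Pile)
    (poss : seq (nat * nat)) (S : seq Pile) : option (seq Pile) :=
  match poss with
  | [::] => Some S
  | (r, pos) :: rest =>
      match print_stack sh (rcons l r) (nth None T r) S pos with
      | None => None
      | Some S' => printing sh l T rest S'
      end
  end.

Definition min_row (m n : nat) (B : {set cell m n}) : nat :=
  \big[minn/m]_(x in B) nat_of_ord x.1.
Definition min_col (m n : nat) (B : {set cell m n}) : nat :=
  \big[minn/n]_(x in B) nat_of_ord x.2.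

Definition norm_block (m n : nat) (B : {set cell m n}) : {set cell 5 5} :=
  [set y : cell 5 5 | natS B (nat_of_ord y.1 + min_row B, nat_of_ord y.2 + min_col B)].

(* one iteration (index i) of the main loop, for pentomino B.
   S = the (m+4)x(n+4) card sequence, TP = the pile of 63 templates. *)
Definition block_step (m n : nat) (sh : seq nat -> nat) (i : nat)
    (B : {set cell m n}) (S TP : seq Pile) : option (seq Pile * seq Pile) :=
  let N := n + 4 in
  let j := min_row B * N + min_col B in
  let t := index (norm_block B) pent_types in
  match chosen_cut sh [:: i; 0] S j (fun S1 p =>
     match chosen_cut sh [:: i; 1] TP t (fun TP1 p' =>
        match printing sh [:: i; 2] (nth [::] TP1 p') (area_positions N p (size S1)) S1 with
        | None => None
        | Some S1' => Some (set_nth [::] TP1 p' [::], S1')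
        end) with
     | None => None
     | Some (TP2, S1') => Some (S1', TP2)
     end) with
  | None => None
  | Some (S2, TP2) =>
      let TP3 := set_nth [::] TP2 t (tmpl_cards (nth set0 pent_types t)) in
      if TP3 == correct_templates then Some (S2, TP3) else None
  end.

Fixpoint run_blocks (m n : nat) (sh : seq nat -> nat) (i : nat)
    (bs : seq {set cell m n}) (S TP : seq Pile) : option (seq Pile * seq Pile) :=
  match bs with
  | [::] => Some (S, TP)
  | B :: bs' =>
      match block_step sh i B S TP with
      | None => None
      | Some (S', TP') => run_blocks sh i.+1 bs' S' TP'
      end
  end.

Definition five_cells_accepts (m n : nat) (clue : cell m n -> option nat)
    (bs : seq {set cell m n}) (sh : seq nat -> nat) : bool :=
  let q := (m + 4) * (n + 4) in
  let S0 : seq Pile := nseq q [:: None] in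
  let TP0 := map tmpl_cards pent_types in
  (TP0 == correct_templates) &&
  match run_blocks sh 0 bs S0 TP0 with
  | None => false
  | Some (Sf, _) =>
      [forall x : cell m n,
         if clue x is Some v
         then nth [::] Sf (nat_of_ord x.1 * (n + 4) + nat_of_ord x.2) == [:: Some v]
         else true]
      && all (fun pos => ((m <= pos %/ (n + 4)) || (n <= pos %% (n + 4)))
                         ==> (nth [::] Sf pos == [:: None]))
             (iota 0 q)
  end.

(* Main.v *)
Require Import Defs.
From mathcomp Require Import all_boot.
From mathcomp Require Import zify.
Set Implicit Arguments. Unset Strict Implicit. Unset Printing Implicit Defensive.


Lemma mod_inj q a b s : a < q -> b < q -> ((a + s) %% q == (b + s) %% q) = (a == b).
Proof. move=> ha hb. by rewrite eqn_modDr !modn_small. Qed.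

Lemma mod_surj q t j : t < q -> j < q -> j = ((j + (q - t)) %% q + t) %% q.
Proof.
move=> ht hj. rewrite modnDml -addnA subnK ?(ltnW ht) // modnDr modn_small //.
Qed.

Lemma nth_rot T (x0 : T) (y : seq T) k j : k <= size y -> j < size y ->
  nth x0 (rot k y) j = nth x0 y ((j + k) %% size y).
Proof.
move=> hk hj. rewrite /rot nth_cat size_drop. case: ltnP => h.
  rewrite nth_drop addnC modn_small //. lia.
rewrite nth_take; last lia.
have -> : (j + k) %% size y = j - (size y - k).
  have e : j + k = (j - (size y - k)) + size y by lia.
  by rewrite e modnDr modn_small //; lia.
by [].
Qed.

Lemma nth_rotr T (x0 : T) (y : seq T) s k : s < size y -> k < size y ->
  nth x0 (rotr s y) ((k + s) %% size y) = nth x0 y k.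
Proof.
move=> hs hk. rewrite /rotr nth_rot; [|lia|by rewrite ltn_pmod //; lia].
rewrite modnDml -addnA subnKC ?(ltnW hs) // modnDr modn_small //.
Qed.

Lemma uniq_pos_rotr (T : eqType) (x0 a : T) (y : seq T) t i : t < size y -> i < size y ->
  (forall k, k < size y -> (nth x0 y k == a) = (k == i)) ->
  forall k, k < size y -> (nth x0 (rotr t y) k == a) = (k == (i + t) %% size y).
Proof.
move=> ht hi H k hk.
have hk' : (k + (size y - t)) %% size y < size y by rewrite ltn_pmod //; lia.
by rewrite (mod_surj ht hk) nth_rotr // H // mod_inj.
Qed.

Lemma index_uniq_pos (T : eqType) (x0 a : T) y j : j < size y ->
  (forall k, k < size y -> (nth x0 y k == a) = (k == j)) -> index a y = j.
Proof.
move=> hj H. have aj : nth x0 y j = a by apply/eqP; rewrite H.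
have ma : a \in y by rewrite -aj mem_nth.
by have := H (index a y); rewrite index_mem ma nth_index // eqxx => /(_ isT) /esym/eqP.
Qed.


Lemma cc_spec A sh l (c : seq Pile) i (k : seq Pile -> nat -> option (seq Pile * A)) :
  i < size c ->
  (forall c' a, k (rotr (sh (rcons l 0) %% size c) c)
       ((i + sh (rcons l 0) %% size c) %% size c) = Some (c', a) -> size c' = size c) ->
  chosen_cut sh l c i k = omap (fun ca => (rot (sh (rcons l 0) %% size c) ca.1, ca.2))
     (k (rotr (sh (rcons l 0) %% size c) c) ((i + sh (rcons l 0) %% size c) %% size c)).
Proof.
move=> hi Hs. rewrite /chosen_cut.
set q := size c. set s := sh (rcons l 0) %% q. set s3 := sh (rcons l 1) %% q.
set row2 := map _ (iota 0 q). set row3 := map _ (iota 0 q).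
have q0 : 0 < q by lia.
have hs : s < q by rewrite ltn_pmod. have hs3 : s3 < q by rewrite ltn_pmod.
have sz2 : size row2 = q by rewrite size_map size_iota.
have sz3 : size row3 = q by rewrite size_map size_iota.
have nth2 : forall k, k < q -> (nth None row2 k == Some 1) = (k == i).
  move=> k0 hk. rewrite (nth_map 0) ?size_iota // nth_iota // add0n.
  by case: ifP.
have nth3 : forall k, k < q -> (nth None row3 k == Some 1) = (k == 0).
  move=> k0 hk. rewrite (nth_map 0) ?size_iota // nth_iota // add0n.
  by case: ifP.
have szz : size (zip row2 row3) = q by rewrite size_zip sz2 sz3 minnn.
rewrite /unzip1 /unzip2 !map_rotr -/(unzip1 _) -/(unzip2 _).
rewrite unzip2_zip ?szz // unzip1_zip ?szz //.
rewrite -/(unzip1 _) unzip1_zip ?sz2 ?sz3 //.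
have -> : index (Some 1) (rotr s row2) = (i + s) %% q.
  apply: (@index_uniq_pos _ None); first by rewrite size_rotr sz2 ltn_pmod.
  rewrite size_rotr => k0 hk. have H := @uniq_pos_rotr _ None (Some 1) row2 s i.
  rewrite sz2 in H hk. exact: (H hs hi nth2 k0 hk).
case E : (k _ _) => [[c' a]|] //=.
have szc : size c' = q by apply: (Hs _ a); rewrite -E.
rewrite map_rot !map_rotr.
have -> : [seq i.2 | i <- zip c' (rotr s (zip row2 row3))] = rotr s (zip row2 row3).
  by apply: unzip2_zip; rewrite size_rotr szz szc.
have -> : [seq i.1 | i <- zip c' (rotr s (zip row2 row3))] = c'.
  by apply: unzip1_zip; rewrite size_rotr szz szc.
rewrite map_rotr.
have -> : [seq i.2 | i <- zip row2 row3] = row3 by apply: unzip2_zip; rewrite sz2 sz3.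
have -> : index (Some 1) (rotr s3 (rotr s row3)) = ((0 + s) %% q + s3) %% q.
  apply: (@index_uniq_pos _ None); first by rewrite !size_rotr sz3 ltn_pmod.
  rewrite !size_rotr sz3 => k0 hk.
  have H := @uniq_pos_rotr _ None (Some 1) row3 s 0.
  have H' := @uniq_pos_rotr _ None (Some 1) (rotr s row3) s3 ((0 + s) %% q).
  rewrite size_rotr sz3 in H'; rewrite sz3 in H.
  apply: H' => //; first by rewrite ltn_pmod.
  exact: H.
congr (Some (_, a)).
apply: (@eq_from_nth _ [::]); first by rewrite !size_rot ?size_rotr.
rewrite size_rot ?size_rotr szc => j hj.
rewrite [LHS]nth_rot ?size_rotr ?szc //; last by rewrite ltnW // ltn_pmod.
rewrite modnDmr add0n (modn_small hs) addnA -modnDml -[in X in nth _ _ (_ %% X)]szc nth_rotr ?szc ?ltn_pmod //.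
by rewrite nth_rot ?szc // ltnW.
Qed.


Lemma rotr_set_nth T (x0 : T) (y : seq T) s k v : s < size y -> k < size y ->
  set_nth x0 (rotr s y) ((k + s) %% size y) v = rotr s (set_nth x0 y k v).
Proof.
move=> hs hk. have szs : size (set_nth x0 y k v) = size y.
  by rewrite size_set_nth; apply/maxn_idPr.
have hm : (k + s) %% size y < size y by rewrite ltn_pmod //; lia.
apply: (@eq_from_nth _ x0); first by rewrite size_set_nth !size_rotr szs; apply/maxn_idPr.
rewrite size_set_nth size_rotr => j.
have -> : maxn ((k + s) %% size y).+1 (size y) = size y by apply/maxn_idPr.
move=> hj. have hj' : (j + (size y - s)) %% size y < size y by rewrite ltn_pmod //; lia.
rewrite (mod_surj hs hj) nth_set_nth /= mod_inj // nth_rotr //.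
set j' := (j + (size y - s)) %% size y.
have := @nth_rotr _ x0 (set_nth x0 y k v) s j'; rewrite szs => -> //.
rewrite nth_set_nth /=.
by case: eqP.
Qed.

Lemma set_nth_id T (x0 : T) (y : seq T) k : k < size y -> set_nth x0 y k (nth x0 y k) = y.
Proof.
move=> hk. apply: (@eq_from_nth _ x0); first by rewrite size_set_nth; apply/maxn_idPr.
move=> j _. rewrite nth_set_nth /=. by case: eqP => [->|].
Qed.

Definition upd (tcard : Card) (card : Pile) : Pile :=
  if tcard is Some v then [:: Some v] else card.

Lemma ps_spec sh l tcard S pos : pos < size S ->
  (tcard != None -> nth [::] S pos = [:: None]) ->
  print_stack sh l tcard S pos = Some (set_nth [::] S pos (upd tcard (nth [::] S pos))).
Proof.
move=> hp hb. rewrite /print_stack.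
have gen : forall (c : seq Pile) b k, size c = 2 -> b < 2 -> nth [::] c b = [:: None] ->
  (forall cs p, nth [::] cs p = [:: None] -> k cs p = Some (set_nth [::] cs p [::], tt)) ->
  chosen_cut (A := unit) sh l c b k
  = Some (set_nth [::] c b [::], tt).
  move=> c b k q2 hb2 cb hk. set s := sh (rcons l 0) %% size c.
  have hs : s < size c by rewrite ltn_pmod // q2.
  have hb2' : b < size c by rewrite q2.
  have nb : nth [::] (rotr s c) ((b + s) %% size c) = [:: None] by rewrite nth_rotr.
  rewrite (@cc_spec _ sh l c b _ hb2'); last first.
    move=> c' a; rewrite hk // => -[<- _]; rewrite size_set_nth size_rotr; apply/maxn_idPr; rewrite ltn_pmod //; lia.
  by rewrite -/s hk //= rotr_set_nth // rotrK.
case: tcard hb => [v|] hb /=.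
  by rewrite gen //= ?hb // => cs p ->.
rewrite gen //=; last by move=> cs p ->.
by rewrite cats0 set_nth_id.
Qed.


Lemma printing_spec sh l T (poss : seq (nat * nat)) S :
  uniq (unzip2 poss) -> all (fun pos => pos < size S) (unzip2 poss) ->
  (forall r pos, (r, pos) \in poss -> nth None T r != None -> nth [::] S pos = [:: None]) ->
  exists S', printing sh l T poss S = Some S' /\ size S' = size S /\
   (forall r pos, (r, pos) \in poss -> nth [::] S' pos = upd (nth None T r) (nth [::] S pos)) /\
   (forall pos, pos \notin unzip2 poss -> nth [::] S' pos = nth [::] S pos).
Proof.
elim: poss S => [|[r pos] rest IH] S /=.
  by move=> _ _ _; exists S; split.
case/andP=> nin urest /andP[hp hall] hpre.
rewrite ps_spec //; last by move=> h; apply: hpre h; exact: mem_head.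
set S1 := set_nth [::] S pos _.
have szS1 : size S1 = size S by rewrite size_set_nth; apply/maxn_idPr.
have nS1 : forall pos', pos' != pos -> nth [::] S1 pos' = nth [::] S pos'.
  by move=> pos' ne; rewrite nth_set_nth /= (negbTE ne).
have hall1 : all (fun pos => pos < size S1) (unzip2 rest) by rewrite szS1.
have hpre1 : forall r' pos', (r', pos') \in rest -> nth None T r' != None -> nth [::] S1 pos' = [:: None].
  move=> r' pos' hin hn. have ne : pos' != pos.
    by apply: contraNneq nin => <-; apply: (map_f (fun x => x.2) hin).
  by rewrite nS1 //; apply: (hpre r') => //; rewrite in_cons hin orbT.
have [S' [E [sz [H1 H2]]]] := IH S1 urest hall1 hpre1.
exists S'; split; first by []. split; first by rewrite sz.
split.
  move=> r' pos'; rewrite inE => /orP[/eqP[-> ->]|hin].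
    by rewrite H2 // nth_set_nth /= eqxx.
  have ne : pos' != pos.
    by apply: contraNneq nin => <-; apply: (map_f (fun x => x.2) hin).
  by rewrite (H1 r') // nS1.
move=> pos'; rewrite inE negb_or => /andP[ne hn].
by rewrite H2 // nS1.
Qed.


Lemma bigmin_seq_le (T : eqType) (r : seq T) (P : pred T) (F : T -> nat) idx x :
  x \in r -> P x -> \big[minn/idx]_(y <- r | P y) F y <= F x.
Proof.
elim: r => [|a r IH] //=. rewrite in_cons big_cons => /orP[/eqP <-|hx] hP.
  by rewrite hP geq_minl.
case: (P a); last exact: IH.
exact: leq_trans (geq_minr _ _) (IH hx hP).
Qed.

Lemma bigmin_le (T : finType) (B : {set T}) (F : T -> nat) idx x :
  x \in B -> \big[minn/idx]_(y in B) F y <= F x.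
Proof. by move=> hx; apply: bigmin_seq_le => //; rewrite mem_index_enum. Qed.

Lemma bigmin_att (T : finType) (B : {set T}) (F : T -> nat) idx x0 :
  x0 \in B -> F x0 < idx -> exists2 x, x \in B & F x = \big[minn/idx]_(y in B) F y.
Proof.
move=> hx0 hlt.
have : (\big[minn/idx]_(y in B) F y == idx) || [exists x in B, F x == \big[minn/idx]_(y in B) F y].
  set v := \big[minn/idx]_(y in B) F y.
  have P : (fun w => (w == idx) || [exists x in B, F x == w]) v.
    apply: (big_ind (fun w => (w == idx) || [exists x in B, F x == w])).
    - by rewrite eqxx.
    - move=> a b ha hb /=. by rewrite /minn; case: ifP.
    - move=> i hi. apply/orP; right; apply/existsP; exists i; by rewrite hi eqxx.
  exact: P.
case/orP=> [/eqP e|/exists_inP[x hx /eqP e]]; last by exists x.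
have := bigmin_le F idx hx0. rewrite e. lia.
Qed.

Lemma adj_bounds m n (x y : cell m n) : adj x y ->
  [/\ (x.1 : nat) <= y.1 + 1, (y.1 : nat) <= x.1 + 1, (x.2 : nat) <= y.2 + 1 & (y.2 : nat) <= x.2 + 1].
Proof. rewrite /adj => h. split; lia. Qed.

Section Geo.
Variables (m n : nat) (B : {set cell m n}).
Hypothesis pB : pentomino B.

Definition eB := [rel u v : cell m n | [&& u \in B, v \in B & adj u v]].

Lemma path_bound (p : seq (cell m n)) x : path eB x p ->
  ((last x p).1 : nat) <= x.1 + size p /\ ((last x p).2 : nat) <= x.2 + size p.
Proof.
elim: p x => [|z p IH] x /=; first by rewrite !addn0.
case/andP=> /and3P[_ _ a] hp. have [h1 h2] := IH z hp.
case: (adj_bounds a) => *. split; lia.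
Qed.

Lemma path_inB (p : seq (cell m n)) x : path eB x p -> x \in B -> {subset x :: p <= B}.
Proof.
elim: p x => [|z p IH] x /=.
  by move=> _ hx y; rewrite inE => /eqP ->.
case/andP=> /and3P[_ hz _] hp hx y; rewrite inE => /orP[/eqP ->//|hy].
exact: IH hp hz y hy.
Qed.

Lemma span x y : x \in B -> y \in B -> (y.1 : nat) <= x.1 + 4 /\ (y.2 : nat) <= x.2 + 4.
Proof.
move=> hx hy. case/andP: pB => /eqP c5 /forall_inP conn.
have := conn x hx => /forall_inP /(_ y hy) /connectP [p hp ->].
case: (shortenP hp) => p' hp' hu _.
have sub := path_inB hp' hx.
have hs : size (x :: p') <= size (enum B).
  apply: uniq_leq_size => // z hz; rewrite mem_enum; exact: sub.
rewrite -cardE c5 /= in hs.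
have [h1 h2] := path_bound hp'. split; [apply: (leq_trans h1)|apply: (leq_trans h2)]; rewrite leq_add2l; exact: hs.
Qed.

End Geo.


Lemma nbr_shift (A A' : pred (nat * nat)) dr dc :
  (forall a b, A (a, b) = A' (a + dr, b + dc)) ->
  (forall a b, A' (a, b) -> dr <= a /\ dc <= b) ->
  forall a b, nbr_count A a b = nbr_count A' (a + dr) (b + dc).
Proof.
move=> H low a b. rewrite /nbr_count !H !addSn.
have L1 : ((a == 0) || ~~ A' (a.-1 + dr, b + dc)) = ((a + dr == 0) || ~~ A' ((a + dr).-1, b + dc)).
  case: a => [|a] /=.
    rewrite add0n. case: dr H low => [|dr] H low //=.
    by case E: (A' _) => //; have := low _ _ E; lia.
  by rewrite ?addSn.
have L2 : ((b == 0) || ~~ A' (a + dr, b.-1 + dc)) = ((b + dc == 0) || ~~ A' (a + dr, (b + dc).-1)).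
  clear L1; case: b => [|b] /=.
    rewrite add0n. case: dc H low => [|dc] H low //=.
    by case E: (A' _) => //; have := low _ _ E; lia.
  by rewrite ?addSn.
by rewrite L1 L2.
Qed.

Lemma nth_tmpl T (x0 : T) (f : nat -> nat -> T) r : r < 25 ->
  nth x0 [seq f a b | a <- iota 0 5, b <- iota 0 5] r = f (r %/ 5) (r %% 5).
Proof.
by do 25! (case: r => [|r] //).
Qed.


Lemma lt5 a b : b <= a + 4 -> b - a < 5. Proof. lia. Qed.

Lemma adj_shift (x1 x2 z1 z2 R C : nat) : R <= x1 -> R <= z1 -> C <= x2 -> C <= z2 ->
 ((x1 == z1) && ((x2.+1 == z2) || (z2.+1 == x2)) || (x2 == z2) && ((x1.+1 == z1) || (z1.+1 == x1))) ->
 ((x1 - R == z1 - R) && (((x2 - C).+1 == z2 - C) || ((z2 - C).+1 == x2 - C)) || (x2 - C == z2 - C) && (((x1-R).+1 == z1 - R) || ((z1-R).+1 == x1 - R))).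
Proof. lia. Qed.

Section Norm.
Variables (m n : nat) (B : {set cell m n}).
Hypothesis pB : pentomino B.

Lemma B_card : #|B| = 5.
Proof. by case/andP: pB => /eqP. Qed.

Lemma B_ne : exists x0, x0 \in B.
Proof. apply/set0Pn; rewrite -card_gt0 B_card. by []. Qed.

Lemma mr_le x : x \in B -> min_row B <= x.1.
Proof. exact: bigmin_le. Qed.
Lemma mc_le x : x \in B -> min_col B <= x.2.
Proof. exact: bigmin_le. Qed.

Lemma mr_att : exists2 x, x \in B & (x.1 : nat) = min_row B.
Proof. have [x0 h] := B_ne. exact: (@bigmin_att _ B (fun x : cell m n => nat_of_ord x.1) m x0 h (ltn_ord _)). Qed.
Lemma mc_att : exists2 x, x \in B & (x.2 : nat) = min_col B.
Proof. have [x0 h] := B_ne. exact: (@bigmin_att _ B (fun x : cell m n => nat_of_ord x.2) n x0 h (ltn_ord _)). Qed.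

Lemma bnds x : x \in B ->
  [/\ min_row B <= x.1, (x.1 : nat) <= min_row B + 4, min_col B <= x.2 & (x.2 : nat) <= min_col B + 4].
Proof.
move=> hx. have [xr hr er] := mr_att. have [xc hc ec] := mc_att.
have [s1 _] := span pB hr hx. have [_ s2] := span pB hc hx.
split; [exact: mr_le| by rewrite -er | exact: mc_le | by rewrite -ec].
Qed.

Lemma natS_norm a b : natS (norm_block B) (a, b) = natS B (a + min_row B, b + min_col B).
Proof.
rewrite /natS. apply/idP/idP.
  case/exists_inP => y; rewrite inE => hy /eqP [ea eb]. by rewrite -ea -eb.
case/exists_inP => x hx /eqP [ea eb].
have [_ h1 _ h2] := bnds hx.
have ha : a < 5 by move: h1; rewrite ea; lia.
have hb : b < 5 by move: h2; rewrite eb; lia.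
apply/exists_inP; exists ((inord a, inord b) : cell 5 5).
  rewrite inE /= !inordK //. apply/exists_inP; exists x => //. by rewrite ea eb.
by rewrite /= !inordK.
Qed.

Definition gN (x : cell m n) : cell 5 5 := (inord (x.1 - min_row B), inord (x.2 - min_col B)).

Lemma gN_val x : x \in B -> ((gN x).1 : nat) = x.1 - min_row B /\ ((gN x).2 : nat) = x.2 - min_col B.
Proof.
move=> hx; have [h1 h2 h3 h4] := bnds hx. by rewrite /gN /= !inordK //; apply: lt5.
Qed.

Lemma norm_eq : norm_block B = gN @: B.
Proof.
apply/setP => y. apply/idP/imsetP.
  rewrite inE /natS => /exists_inP [x hx /eqP [e1 e2]].
  exists x => //. have [h1 h2 h3 h4] := bnds hx.
  case: y e1 e2 => y1 y2 /= e1 e2. have := ltn_ord y1; have := ltn_ord y2 => l2 l1.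
  by congr pair; apply: ord_inj; rewrite ?e1 ?e2 addnK inordK.
case=> x hx ->. rewrite inE /natS; apply/exists_inP; exists x => //.
have [h1 h2 h3 h4] := bnds hx. have [g1 g2] := gN_val hx.
rewrite g1 g2 !subnK //.
Qed.

Lemma norm_card : #|norm_block B| = 5.
Proof.
rewrite norm_eq card_in_imset ?B_card //.
move=> x y hx hy e. have [g1 g2] := gN_val hx. have [g3 g4] := gN_val hy.
have [a1 a2 a3 a4] := bnds hx. have [b1 b2 b3 b4] := bnds hy.
have e1 : ((gN x).1 : nat) = (gN y).1 by rewrite e.
have e2 : ((gN x).2 : nat) = (gN y).2 by rewrite e.
case: x hx e g1 g2 a1 a2 a3 a4 e1 e2 => x1 x2; case: y hy g3 g4 b1 b2 b3 b4 => y1 y2 /= *.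
congr pair; apply: ord_inj; lia.
Qed.

Lemma gN_adj x z : x \in B -> z \in B -> adj x z -> adj (gN x) (gN z).
Proof.
move=> hx hz. have [g1 g2] := gN_val hx. have [g3 g4] := gN_val hz.
have [a1 a2 a3 a4] := bnds hx. have [b1 b2 b3 b4] := bnds hz.
rewrite /adj g1 g2 g3 g4. exact: (adj_shift a1 b1 a3 b3).
Qed.

Lemma norm_conn : connected_set (norm_block B).
Proof.
rewrite norm_eq. apply/forall_inP => y1 /imsetP [x1 hx1 ->].
apply/forall_inP => y2 /imsetP [x2 hx2 ->].
case/andP: pB => _ /forall_inP conn.
have := conn x1 hx1 => /forall_inP /(_ x2 hx2) /connectP [p hp ->].
elim: p x1 hx1 hp {conn} => [|z p IH] x hx /=; first by rewrite connect0.
case/andP => /and3P [_ hz a] hp.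
apply: connect_trans (IH z hz hp). apply: connect1 => /=.
by rewrite !imset_f // gN_adj.
Qed.

Lemma norm_pent : norm_block B \in pent_types.
Proof.
rewrite /pent_types mem_enum inE. apply/and3P; split.
- by rewrite /pentomino norm_card eqxx norm_conn.
- have [x hx e] := mr_att. apply/exists_inP; exists (gN x).
    by rewrite norm_eq imset_f.
  by have [g1 _] := gN_val hx; rewrite g1 e subnn.
- have [x hx e] := mc_att. apply/exists_inP; exists (gN x).
    by rewrite norm_eq imset_f.
  by have [_ g2] := gN_val hx; rewrite g2 e subnn.
Qed.

Lemma tmpl_nth r : r < 25 ->
  nth None (tmpl_cards (norm_block B)) r =
  if natS B (r %/ 5 + min_row B, r %% 5 + min_col B)
  then Some (nbr_count (natS B) (r %/ 5 + min_row B) (r %% 5 + min_col B)) else None.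
Proof.
move=> hr. rewrite /tmpl_cards nth_tmpl // natS_norm.
rewrite (@nbr_shift (natS (norm_block B)) (natS B) (min_row B) (min_col B)) //.
  by move=> a b; rewrite natS_norm.
move=> a b /exists_inP [x hx /eqP [<- <-]]. by have [h1 _ h3 _] := bnds hx.
Qed.

End Norm.


Lemma kr_lemma R C N M r : r < 25 -> R < M -> C + 4 < N ->
  R * N + C + (r %/ 5) * N + r %% 5 = (R + r %/ 5) * N + (C + r %% 5) /\
  R * N + C + (r %/ 5) * N + r %% 5 < (M + 4) * N /\
  (R * N + C + (r %/ 5) * N + r %% 5) %/ N = R + r %/ 5 /\
  (R * N + C + (r %/ 5) * N + r %% 5) %% N = C + r %% 5.
Proof.
move=> hr hR hC.
have ha : r %/ 5 < 5 by rewrite ltn_divLR.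
have hb : r %% 5 < 5 by rewrite ltn_mod.
have e : R * N + C + (r %/ 5) * N + r %% 5 = (R + r %/ 5) * N + (C + r %% 5).
  rewrite mulnDl. set X := R * N. set Y := r %/ 5 * N. lia.
have hN : 0 < N by lia.
have hcb : C + r %% 5 < N by lia.
rewrite e; split => //; split; last split.
- have h1 : (R + r %/ 5).+1 <= M + 4 by lia.
  have := leq_mul h1 (leqnn N). rewrite mulSn. set X := (R + r %/ 5) * N. set Y := (M + 4) * N. lia.
- by rewrite divnMDl // (divn_small hcb) addn0.
- by rewrite modnMDl modn_small.
Qed.

Section Main.
Variables m n : nat.

Definition cellAt (pos : nat) : option (cell m n) :=
  match (insub (pos %/ (n + 4)) : option 'I_m), (insub (pos %% (n + 4)) : option 'I_n) with
  | Some a, Some b => Some (a, b)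
  | _, _ => None
  end.

Lemma cellAt_pos (x : cell m n) : cellAt (x.1 * (n + 4) + x.2) = Some x.
Proof.
have h2 : (x.2 : nat) < n + 4 by have := ltn_ord x.2; lia.
have N0 : 0 < n + 4 by rewrite addn4.
rewrite /cellAt (divnMDl _ _ N0) modnMDl (divn_small h2) (modn_small h2) addn0 !valK.
by case: x {h2}.
Qed.

Lemma cell_dec (x : cell m n) :
  (x.1 * (n + 4) + x.2) %/ (n + 4) = x.1 /\ (x.1 * (n + 4) + x.2) %% (n + 4) = x.2.
Proof.
have h2 : (x.2 : nat) < n + 4 by have := ltn_ord x.2; lia.
have N0 : 0 < n + 4 by rewrite addn4.
by rewrite (divnMDl _ _ N0) modnMDl (divn_small h2) (modn_small h2) addn0.
Qed.

Lemma cellAt_inv pos x : cellAt pos = Some x -> pos = x.1 * (n + 4) + x.2.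
Proof.
rewrite /cellAt. case: insubP => [a _ ea|_] //; case: insubP => [b _ eb|_] // [<-] /=.
by rewrite ea eb -divn_eq.
Qed.

Definition expect (D : seq {set cell m n}) (pos : nat) : Pile :=
  if cellAt pos is Some x then
    (if has (fun B : {set cell m n} => x \in B) D
     then [:: Some (nbr_count (natS (nth set0 D (find (fun B : {set cell m n} => x \in B) D))) x.1 x.2)]
     else [:: None])
  else [:: None].

Lemma expect_in (D : seq {set cell m n}) pos x (B : {set cell m n}) : cellAt pos = Some x -> x \in B ->
  expect (B :: D) pos = [:: Some (nbr_count (natS B) x.1 x.2)].
Proof. by rewrite /expect => -> /= ->. Qed.

Lemma expect_notin (D : seq {set cell m n}) pos (B : {set cell m n}) : (forall x, cellAt pos = Some x -> x \notin B) ->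
  expect (B :: D) pos = expect D pos.
Proof.
rewrite /expect. case: (cellAt pos) => [x|] // /(_ x erefl) /negbTE hx /=.
by rewrite hx.
Qed.

Lemma expect_none (D : seq {set cell m n}) pos : (forall x, cellAt pos = Some x -> ~~ has (fun B : {set cell m n} => x \in B) D) ->
  expect D pos = [:: None].
Proof. rewrite /expect; case: cellAt => [x|] // /(_ x erefl) /negbTE -> //. Qed.

Definition Inv (D : seq {set cell m n}) (S : seq Pile) :=
  size S = (m + 4) * (n + 4) /\
  forall pos, pos < (m + 4) * (n + 4) -> nth [::] S pos = expect D pos.

Lemma block_spec sh i (B : {set cell m n}) (D : seq {set cell m n}) S : pentomino B -> Inv D S ->
  (forall x, x \in B -> ~~ has (fun B' : {set cell m n} => x \in B') D) ->
  exists S', block_step sh i B S correct_templates = Some (S', correct_templates) /\ Inv (B :: D) S'.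
Proof.
move=> pB [szS HS] disj.
have N0 : 0 < n + 4 by rewrite addn4.
have [xr hxr er] := mr_att pB. have [xc hxc ec] := mc_att pB.
have hR : min_row B < m by rewrite -er ltn_ord.
have hC : min_col B + 4 < n + 4 by rewrite -ec ltn_add2r ltn_ord.
set j := min_row B * (n + 4) + min_col B.
set kr := fun r => j + r %/ 5 * (n + 4) + r %% 5.
have krP : forall r, r < 25 -> [/\ kr r = (min_row B + r %/ 5) * (n + 4) + (min_col B + r %% 5),
    kr r < size S, kr r %/ (n + 4) = min_row B + r %/ 5 & kr r %% (n + 4) = min_col B + r %% 5].
  move=> r hr. have [e [l [d1 d2]]] := kr_lemma hr hR hC. rewrite szS; split; [exact: e|exact: l|exact: d1|exact: d2].
have hj : j < size S.
  have [_ l _ _] := krP 0 isT. move: l. rewrite /kr div0n mod0n mul0n !addn0. by [].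
set s := sh (rcons [:: i; 0] 0) %% size S.
have hs : s < size S by rewrite ltn_pmod //; lia.
set TP := correct_templates.
set t := index (norm_block B) pent_types.
have szTP : size TP = size pent_types by rewrite size_map.
have ht : t < size TP by rewrite szTP index_mem norm_pent.
set s2 := sh (rcons [:: i; 1] 0) %% size TP.
have hs2 : s2 < size TP by rewrite ltn_pmod //; lia.
have nTP : nth [::] TP t = tmpl_cards (norm_block B).
  by rewrite /TP /correct_templates (nth_map set0) -?szTP // nth_index // norm_pent.
have nT : nth [::] (rotr s2 TP) ((t + s2) %% size TP) = tmpl_cards (norm_block B).
  by rewrite nth_rotr.
set T := tmpl_cards (norm_block B).
have poss_eq : area_positions (n + 4) ((j + s) %% size S) (size (rotr s S)) =
    [seq (r, (kr r + s) %% size S) | r <- iota 0 25].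
  rewrite size_rotr /area_positions; apply: eq_map => r /=. congr pair.
  rewrite -!addnA modnDml. congr modn. rewrite /kr. set X := _ * _. set Y := r %% 5. lia.
set poss := [seq (r, (kr r + s) %% size S) | r <- iota 0 25].
have U : uniq (unzip2 poss).
  rewrite /unzip2 -map_comp map_inj_in_uniq ?iota_uniq // => r1 r2.
  rewrite !mem_iota /= => h1 h2 /eqP.
  have [ea la da ma] := krP r1 h1. have [eb lb db mb] := krP r2 h2.
  rewrite mod_inj // => /eqP e.
  have e1 : r1 %/ 5 = r2 %/ 5 by apply/eqP; rewrite -(eqn_add2l (min_row B)) -da -db e.
  have e2 : r1 %% 5 = r2 %% 5 by apply/eqP; rewrite -(eqn_add2l (min_col B)) -ma -mb e.
  by rewrite (divn_eq r1 5) (divn_eq r2 5) e1 e2.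
have Al : all (fun pos => pos < size (rotr s S)) (unzip2 poss).
  apply/allP => x; rewrite /unzip2 -map_comp => /mapP [r _ ->] /=.
  rewrite size_rotr ltn_pmod //; lia.
have Pre : forall r pos, (r, pos) \in poss -> nth None T r != None ->
    nth [::] (rotr s S) pos = [:: None].
  move=> r pos /mapP [r' hr' [-> ->]] hn.
  rewrite mem_iota in hr'. have [e l d1 d2] := krP r' hr'.
  rewrite nth_rotr // HS; last by rewrite -szS.
  move: hn; rewrite /T tmpl_nth //. case: ifP => // hnat _.
  case/exists_inP: hnat => x hx /eqP [ex1 ex2].
  have ek : kr r' = x.1 * (n + 4) + x.2.
    by rewrite e ex1 ex2 [min_row B + _]addnC [min_col B + _]addnC.
  apply: expect_none => x'; rewrite ek cellAt_pos => -[<-]. exact: disj.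
have [S1' [E [sz1 [H1 H2]]]] := printing_spec sh [:: i; 2] U Al Pre.
have Kin : chosen_cut sh [:: i; 1] TP t (fun TP1 p' =>
     match printing sh [:: i; 2] (nth [::] TP1 p')
        (area_positions (n + 4) ((j + s) %% size S) (size (rotr s S))) (rotr s S) with
     | Some S1' => Some (set_nth [::] TP1 p' [::], S1')
     | None => None end) = Some (set_nth [::] TP t [::], S1').
  rewrite (@cc_spec _ sh [:: i; 1] TP t _ ht) -/s2; cbv beta.
    by rewrite nT poss_eq -/poss -/T E /= rotr_set_nth // rotrK.
  move=> c' a; rewrite -/s2 nT poss_eq -/poss -/T E => -[<- _].
  rewrite size_set_nth size_rotr; apply/maxn_idPr; rewrite ltn_pmod //; lia.
rewrite /block_step -/j -/t.
rewrite (@cc_spec _ sh [:: i; 0] S j _ hj) -/s; cbv beta; last first.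
  by move=> c' a; rewrite Kin => -[<- _]; rewrite sz1 size_rotr.
rewrite Kin /= set_set_nth eqxx nth_index ?norm_pent // -nTP set_nth_id // eqxx.
exists (rot s S1'); split => //.
split; first by rewrite size_rot sz1 size_rotr szS.
move=> pos hpos. have hpS : pos < size S by rewrite szS.
rewrite nth_rot; [| by rewrite sz1 size_rotr ltnW | by rewrite sz1 size_rotr].
rewrite sz1 size_rotr.
case: (boolP (has (fun r => kr r == pos) (iota 0 25))).
  case/hasP => r hr /eqP ekr. rewrite mem_iota in hr. have hr' : r < 25 by [].
  have [e l d1 d2] := krP r hr'.
  rewrite -ekr (H1 r); last by apply/mapP; exists r; rewrite ?mem_iota.
  rewrite nth_rotr // HS; last by rewrite -szS.
  rewrite /T tmpl_nth //. case: ifP => hnat.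
    case/exists_inP: (hnat) => x hx /eqP [ex1 ex2].
    have ek : kr r = x.1 * (n + 4) + x.2.
      by rewrite e ex1 ex2 [min_row B + _]addnC [min_col B + _]addnC.
    by rewrite (@expect_in _ _ x) ?ek ?cellAt_pos // ex1 ex2.
  rewrite expect_notin // => x /cellAt_inv ek. apply/negP => hx.
  suff : natS B (r %/ 5 + min_row B, r %% 5 + min_col B) by rewrite hnat.
  apply/exists_inP; exists x => //.
  have [c1 c2] := cell_dec x. rewrite -ek d1 in c1. rewrite -ek d2 in c2.
  by rewrite -c1 -c2 [min_row B + _]addnC [min_col B + _]addnC.
move/hasPn => nr.
rewrite H2; last first.
  apply/negP; rewrite /unzip2 -map_comp => /mapP [r hr] /= /eqP.
  rewrite mem_iota in hr. have [e l d1 d2] := krP r hr.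
  rewrite mod_inj // => /eqP ep. by move: (nr r); rewrite mem_iota hr ep eqxx => /(_ isT).
rewrite nth_rotr // HS //. rewrite expect_notin // => x /cellAt_inv ek. apply/negP => hx.
have [b1 b2 b3 b4] := bnds pB hx.
have l1 : x.1 - min_row B < 5 by exact: lt5 b2.
have l2 : x.2 - min_col B < 5 by exact: lt5 b4.
set r := (x.1 - min_row B) * 5 + (x.2 - min_col B).
have r1 : r %/ 5 = x.1 - min_row B by rewrite /r divnMDl // (divn_small l2) addn0.
have r2 : r %% 5 = x.2 - min_col B by rewrite /r modnMDl (modn_small l2).
have hr : r < 25.
  rewrite /r. move: (x.1 - min_row B) (x.2 - min_col B) l1 l2 => a b. lia.
have [e _ _ _] := krP r hr.
move: (nr r); rewrite mem_iota hr /= e r1 r2 subnKC // subnKC // => /(_ isT). by rewrite ek eqxx.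
Qed.
End Main.


Lemma run_spec m n (P : {set {set cell m n}}) sh :
  trivIset P -> (forall B, B \in P -> pentomino B) ->
  forall (R D : seq {set cell m n}) S i, uniq R -> {subset R <= P} ->
  (forall B x, B \in R -> x \in B -> ~~ has (fun B' : {set cell m n} => x \in B') D) ->
  Inv D S ->
  exists Sf, run_blocks sh i R S correct_templates = Some (Sf, correct_templates)
             /\ Inv (rev R ++ D) Sf.
Proof.
move=> triv hpent R; elim: R => [|B R IH] D S i /=.
  by move=> _ _ _ hI; exists S.
case/andP=> nB uR sub disj hI.
have BP : B \in P by apply: sub; rewrite mem_head.
have [S' [E hI']] := block_spec sh i (hpent B BP) hI (fun x hx => disj B x (mem_head _ _) hx).
rewrite E.
have sub' : {subset R <= P} by move=> B' h; apply: sub; rewrite in_cons h orbT.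
have disj' : forall B' x, B' \in R -> x \in B' ->
    ~~ has (fun B'0 : {set cell m n} => x \in B'0) (B :: D).
  move=> B' x hB' hx /=. rewrite negb_or (disj B' x) ?in_cons ?hB' ?orbT // andbT.
  have ne : B != B' by apply: contraNneq nB => ->.
  move/trivIsetP: triv => /(_ B B' BP (sub' _ hB') ne) dj.
  by rewrite (disjointFl dj hx).
have [Sf [E' hIf]] := IH (B :: D) S' i.+1 uR sub' disj' hI'.
exists Sf; split => //. by rewrite rev_cons cat_rcons.
Qed.

Lemma cell_pos_lt m n (x : cell m n) : x.1 * (n + 4) + x.2 < (m + 4) * (n + 4).
Proof.
have h1 : (x.1 : nat).+1 <= m + 4 by have := ltn_ord x.1; lia.
have h2 : (x.2 : nat) < n + 4 by have := ltn_ord x.2; lia.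
have := leq_mul h1 (leqnn (n + 4)). rewrite mulSn.
move: (x.1 * (n + 4)) ((m + 4) * (n + 4)) (x.2 : nat) h2 => a b c. lia.
Qed.

Unset Implicit Arguments. Set Strict Implicit. Set Printing Implicit Defensive.

Theorem lemma1 (m n : nat) (clue : cell m n -> option nat)
    (P : {set {set cell m n}}) (hsol : is_solution clue P)
    (bs : seq {set cell m n}) (hbs : perm_eq bs (enum P))
    (sh : seq nat -> nat) :
  five_cells_accepts clue bs sh = true.
Proof.
case: hsol => hpart hpent hclue.
case/and3P: (hpart) => /eqP hcov triv _.
rewrite /five_cells_accepts.
have -> : (map tmpl_cards pent_types == correct_templates) = true by apply/eqP.
rewrite andTb -/correct_templates.
have uR : uniq bs by rewrite (perm_uniq hbs) enum_uniq.
have sub : {subset bs <= P} by move=> B; rewrite (perm_mem hbs) mem_enum.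
have I0 : @Inv m n [::] (nseq ((m + 4) * (n + 4)) [:: None]).
  rewrite /Inv size_nseq; split => //.
  move=> pos hpos. rewrite nth_nseq hpos. by rewrite expect_none.
have [Sf [E [szf HSf]]] := @run_spec m n P sh triv hpent bs [::] _ 0 uR sub (fun _ _ _ _ => isT) I0.
rewrite cats0 in HSf. rewrite E. apply/andP; split.
  apply/forallP => x. case ex: (clue x) => [v|] //.
  rewrite HSf ?cell_pos_lt // /expect cellAt_pos.
  have xc : x \in cover P by rewrite hcov inE.
  have hh : has (fun B : {set cell m n} => x \in B) (rev bs).
    apply/hasP; exists (pblock P x); last by rewrite mem_pblock.
    by rewrite mem_rev (perm_mem hbs) mem_enum pblock_mem.
  rewrite hh.
  set B' := nth set0 _ _.
  have hB'1 : x \in B' by apply: (nth_find set0 hh).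
  have hB'2 : B' \in P.
    by rewrite -mem_enum -(perm_mem hbs) -mem_rev; apply: mem_nth; rewrite -has_find.
  by rewrite -(def_pblock triv hB'2 hB'1) (hclue x v ex).
apply/allP => pos; rewrite mem_iota => /andP [_ hpos] /=. apply/implyP => hd.
rewrite HSf //. rewrite expect_none // => x /cellAt_inv ek.
have [c1 c2] := cell_dec x. rewrite -ek in c1 c2.
move: hd; rewrite c1 c2 => /orP [h|h].
  by have := ltn_ord x.1; rewrite ltnNge h.
by have := ltn_ord x.2; rewrite ltnNge h.
Qed.
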